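(* Let $S$ be an additively reduced semidomain and $G$ a torsion-free abelian group. Let $f=\sum_{i=0}^n s_ix^{g_i}\in S[G]$ with $g_0>g_1>\dots>g_n$ and $s_i\in S\setminus\{0\}$. Then: (1) if $|\operatorname{supp}(f)|\ge2$ and $2g_{n-1}>g_0+g_n$, then $f$ is monolithic; (2) if $|\operatorname{supp}(f)|>3$ and $2g_{n-1}\ge g_0+g_n$, then $f$ is monolithic.
   Context: A semidomain is a subsemiring (containing $0$ and $1$) of an integral domain. $S$ is additively reduced if $0$ is the only invertible element of $(S,+)$. $G$ carries a fixed total order compatible with addition. $S[G]$ is the semidomain of formal finite sums $\sum_{g\in G}s_gx^g$ with polynomial operations; $\operatorname{supp}(f)$ is the set of exponents with nonzero coefficient. A nonzero $f\in S[G]$ is monolithic if whenever $f=pq$ with $p,q\in S[G]$, one of $p,q$ is a monomial $sx^g$. *)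

(* Defs.v *)
From HB Require Import structures.
From mathcomp Require Import all_boot all_order all_algebra.
From mathcomp Require Import finmap.
Set Implicit Arguments. Unset Strict Implicit. Unset Printing Implicit Defensive.
Import Order.TTheory GRing.Theory Num.Theory.
Local Open Scope ring_scope.

(* The semidomain S is a subsemiring (closed under 0, 1, +, * ) of an
   integral domain R; an element of the group semiring S[G] is a finitely
   supported function G -> R all of whose values lie in S. *)

Definition add_reduced (R : idomainType) (S : {pred R}) : Prop :=
  forall x y, x \in S -> y \in S -> x + y = 0 -> x = 0.

Definition total_compatible_order (G : porderZmodType) : Prop :=
  (forall x y : G, (x <= y) || (y <= x)) /\
  (forall x y z : G, x <= y -> x + z <= y + z).

Definition torsion_free (G : zmodType) : Prop :=
  forall (k : nat) (x : G), x *+ k.+1 = 0 -> x = 0.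

Definition in_SG (R : idomainType) (S : {pred R}) (G : choiceType)
  (p : {fsfun G -> R with 0}) : Prop := forall g, p g \in S.

(* coefficient of x^g in the product p * q (convolution) *)
Definition gmul (R : idomainType) (G : zmodType)
  (p q : {fsfun G -> R with 0}) (g : G) : R :=
  \sum_(h <- finsupp p) p h * q (g - h).

Definition is_monomial (R : idomainType) (G : choiceType)
  (p : {fsfun G -> R with 0}) : Prop :=
  exists (s : R) (g0 : G), forall g, p g = if g == g0 then s else 0.

Definition monolithic (R : idomainType) (S : {pred R}) (G : zmodType)
  (f : {fsfun G -> R with 0}) : Prop :=
  in_SG S f /\ (exists g, f g != 0) /\
  forall p q : {fsfun G -> R with 0}, in_SG S p -> in_SG S q ->
    (forall g, f g = gmul p q g) -> is_monomial p \/ is_monomial q.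

(* Main.v *)
Require Import Defs.
From HB Require Import structures.
From mathcomp Require Import all_boot all_order all_algebra.
From mathcomp Require Import finmap zify.
From Stdlib Require Import Classical.
Import Order.TTheory GRing.Theory Num.Theory.
Local Open Scope ring_scope.

Lemma sumS_eq0 (R : idomainType) (S : semiringClosed R) (T : eqType)
  (r : seq T) (F : T -> R) :
  add_reduced S -> (forall h, F h \in S) -> \sum_(h <- r) F h = 0 ->
  forall h, h \in r -> F h = 0.
Proof.
move=> hS FS; elim: r => [|x r IH] //=; rewrite big_cons => H.
have Sr : \sum_(h <- r) F h \in S by apply: rpred_sum => i _.
have Fx := hS _ _ (FS x) Sr H.
move: H; rewrite Fx add0r => H h; rewrite in_cons => /orP[/eqP->|hr] //.
exact: IH.
Qed.

Lemma gmul_neq0 (R : idomainType) (S : semiringClosed R) (G : zmodType)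
  (p q : {fsfun G -> R with 0}) a b :
  add_reduced S -> in_SG S p -> in_SG S q -> p a != 0 -> q b != 0 ->
  gmul p q (a + b) != 0.
Proof.
move=> hS Sp Sq pa qb; apply/eqP => H.
have := @sumS_eq0 R S G _ (fun h => p h * q (a + b - h)) hS _ H a.
move=> /(_ _ _)/eqP /=.
have -> : a + b - a = b by rewrite [a + b]addrC addrK.
rewrite mulf_eq0 (negbTE pa) (negbTE qb) => H1; suff: false by []; apply: H1.
- by move=> h; apply: rpredM.
- by rewrite mem_finsupp.
Qed.

Lemma gmul_supp (R : idomainType) (G : zmodType)
  (p q : {fsfun G -> R with 0}) c :
  gmul p q c != 0 -> exists a, p a != 0 /\ q (c - a) != 0.
Proof.
move=> H.
case: (boolP (has (fun h => p h * q (c - h) != 0) (finsupp p))) => [/hasP [a _ Ha]|/hasPn Hn].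
  by exists a; move: Ha; rewrite mulf_eq0 negb_or => /andP.
move/eqP: H; case; rewrite /gmul big1_seq // => h /andP [_ hin].
by have := Hn h hin; rewrite negbK => /eqP.
Qed.

Lemma nonmono (R : idomainType) (G : zmodType) (p : {fsfun G -> R with 0}) a :
  ~ is_monomial p -> exists x, p x != 0 /\ x != a.
Proof.
move=> nm.
case: (boolP (has (fun x => x != a) (finsupp p))) => [/hasP [x xin xa]|/hasPn Hn].
  by exists x; split => //; rewrite mem_finsupp in xin.
exfalso; apply: nm; exists (p a), a => x; case: eqP => [->//|ne].
apply/eqP; apply: contraT => px.
have := Hn x; rewrite mem_finsupp => /(_ px); rewrite negbK => /eqP.
by [].
Qed.

Section OG.
Variable G : porderZmodType.
Hypothesis Hc : forall x y z : G, x <= y -> x + z <= y + z.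

Lemma leD2r (x y z : G) : x + z <= y + z -> x <= y.
Proof. by move=> H; have := @Hc _ _ (-z) H; rewrite !addrK. Qed.

Lemma leD2l (x y z : G) : z + x <= z + y -> x <= y.
Proof. by rewrite addrC [z + y]addrC => /leD2r. Qed.

Lemma leD2 (a b c d : G) : a <= b -> c <= d -> a + c <= b + d.
Proof.
move=> ab cd; apply: le_trans (@Hc _ _ c ab) _.
by rewrite addrC [b + d]addrC; apply: Hc.
Qed.
End OG.

Theorem lemma3p3 (R : idomainType) (S : semiringClosed R)
  (G : porderZmodType) (n : nat) (s : nat -> R) (g : nat -> G)
  (f : {fsfun G -> R with 0}) :
  add_reduced S ->
  torsion_free G ->
  total_compatible_order G ->
  (forall i j, (i < j <= n)%N -> g j < g i) ->
  (forall i, (i <= n)%N -> s i \in S) ->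
  (forall i, (i <= n)%N -> s i != 0) ->
  (forall x, f x = \sum_(i < n.+1) (if x == g i then s i else 0)) ->
  ((1 <= n)%N -> g 0%N + g n < g n.-1 + g n.-1 -> monolithic S f) /\
  ((3 <= n)%N -> g 0%N + g n <= g n.-1 + g n.-1 -> monolithic S f).
Proof.
move=> hS _ [Htot Hc] Hg Ss Sn Hf.
have g_le : forall i j, (i <= j <= n)%N -> g j <= g i.
  move=> i j /andP[ij jn]; rewrite leq_eqVlt in ij.
  case/orP: ij => [/eqP->|ij]; first exact: lexx.
  by apply: ltW; apply: Hg; rewrite ij jn.
have g_neq : forall i j, (i <= n)%N -> (j <= n)%N -> i != j -> g i != g j.
  move=> i j hi hj; case: (ltngtP i j) => [ij|ji|->]; last by rewrite eqxx.
  - by rewrite eq_sym (lt_eqF (Hg i j _)) // ij hj.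
  - by rewrite (lt_eqF (Hg j i _)) // ji hi.
have f_g : forall i, (i <= n)%N -> f (g i) = s i.
  move=> i hi; rewrite Hf (bigD1 (Ordinal (hi : (i < n.+1)%N))) //= eqxx.
  rewrite big1 ?addr0 // => j /= hj.
  have jn : (j <= n)%N by rewrite -ltnS.
  have ij : i != j.
    rewrite eq_sym; apply: contra hj => /eqP E; apply/eqP/val_inj => /=.
    by rewrite E.
  by rewrite (negbTE (g_neq i j hi jn ij)).
have f_supp : forall x, f x != 0 -> exists2 i, (i <= n)%N & x = g i.
  move=> x; rewrite Hf => H.
  case: (pickP (fun i : 'I_n.+1 => x == g i)) => [i /eqP xi | none].
    by exists i => //; rewrite -ltnS.
  by move: H; rewrite big1 ?eqxx // => i _; rewrite none.
have SG : in_SG S f.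
  move=> x; rewrite Hf; apply: rpred_sum => i _; case: ifP => _.
  - by apply: Ss; rewrite -ltnS.
  - exact: rpred0.
have core : forall p q, in_SG S p -> in_SG S q ->
    (forall x, f x = gmul p q x) -> ~ is_monomial p -> ~ is_monomial q ->
    (1 <= n)%N ->
    g n.-1 + g n.-1 <= g 0%N + g n /\
    ((3 <= n)%N -> g 0%N + g n <= g n.-1 + g n.-1 -> False).
  move=> p q Sp Sq Hpq nmp nmq n1.
  have supp_sum : forall a b, p a != 0 -> q b != 0 ->
      exists2 i, (i <= n)%N & a + b = g i.
    by move=> a b pa qb; apply: f_supp; rewrite Hpq; exact: (@gmul_neq0 _ S _ p q a b hS Sp Sq pa qb).
  have splt : forall i, (i <= n)%N -> exists a, p a != 0 /\ q (g i - a) != 0.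
    by move=> i hi; apply: gmul_supp; rewrite -Hpq f_g //; exact: Sn.
  have [a0 [pa0 qb0]] := splt 0%N (leq0n _).
  have [am [pam qbk]] := splt n (leqnn _).
  set b0 := g 0%N - a0 in qb0; set bk := g n - am in qbk.
  have e0 : a0 + b0 = g 0%N by rewrite /b0 addrC subrK.
  have en : am + bk = g n by rewrite /bk addrC subrK.
  have ub_p : forall a, p a != 0 -> a <= a0.
    move=> a pa; apply: (@leD2r G Hc _ _ (b0)); rewrite e0.
    have [i hi ->] := supp_sum a b0 pa qb0; apply: g_le; by rewrite leq0n hi.
  have ub_q : forall b, q b != 0 -> b <= b0.
    move=> b qb; apply: (@leD2l G Hc _ _ (a0)); rewrite e0.
    have [i hi ->] := supp_sum a0 b pa0 qb; apply: g_le; by rewrite leq0n hi.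
  have lb_p : forall a, p a != 0 -> am <= a.
    move=> a pa; apply: (@leD2r G Hc _ _ (bk)); rewrite en.
    have [i hi ->] := supp_sum a bk pa qbk; apply: g_le; by rewrite hi leqnn.
  have lb_q : forall b, q b != 0 -> bk <= b.
    move=> b qb; apply: (@leD2l G Hc _ _ (am)); rewrite en.
    have [i hi ->] := supp_sum am b pam qb; apply: g_le; by rewrite hi leqnn.
  have L_p : forall a, p a != 0 -> a != am -> g n.-1 <= a + bk.
    move=> a pa ne; have [i hi e] := supp_sum a bk pa qbk; rewrite e.
    have ine : i != n.
      apply: contra ne => /eqP E; rewrite E -en in e; apply/eqP.
      exact: (addIr _ e).
    apply: g_le; apply/andP; split; first by lia.
    by rewrite leq_pred.
  have L_q : forall b, q b != 0 -> b != bk -> g n.-1 <= am + b.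
    move=> b qb ne; have [i hi e] := supp_sum am b pam qb; rewrite e.
    have ine : i != n.
      apply: contra ne => /eqP E; rewrite E -en in e; apply/eqP.
      exact: (addrI _ e).
    apply: g_le; apply/andP; split; first by lia.
    by rewrite leq_pred.
  have a0am : a0 != am.
    have [x [px xne]] := @nonmono _ _ p am nmp.
    apply/eqP => E; move/eqP: xne; apply; apply: le_anti.
    by rewrite (lb_p x px) andbT -E; exact: ub_p.
  have b0bk : b0 != bk.
    have [x [px xne]] := @nonmono _ _ q bk nmq.
    apply/eqP => E; move/eqP: xne; apply; apply: le_anti.
    by rewrite (lb_q x px) andbT -E; exact: ub_q.
  have cu := L_p a0 pa0 a0am.
  have cv := L_q b0 qb0 b0bk.
  have uv : (a0 + bk) + (am + b0) = g 0%N + g n.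
    rewrite -e0 -en addrACA [RHS]addrACA [bk + b0]addrC //.
  split; first by rewrite -uv; exact: (@leD2 G Hc).
  move=> n3 hle.
  have uc : a0 + bk = g n.-1.
    apply: le_anti; rewrite cu andbT; apply: (@leD2r G Hc _ _ (g n.-1)).
    apply: le_trans hle; rewrite -uv; apply: (@leD2 G Hc) => //; exact: lexx.
  have vc : am + b0 = g n.-1.
    apply: le_anti; rewrite cv andbT; apply: (@leD2l G Hc _ _ (g n.-1)).
    apply: le_trans hle; rewrite -uv; apply: (@leD2 G Hc) => //; exact: lexx.
  have [a1 [pa1 qb1]] := splt 1%N (ltnW (ltnW n3)).
  set b1 := g 1%N - a1 in qb1.
  have e1 : a1 + b1 = g 1%N by rewrite /b1 addrC subrK.
  have ha1 : a1 = am \/ a1 = a0.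
    case: (eqVneq a1 am) => [->|ne]; [by left | right].
    apply: le_anti; rewrite ub_p //=; apply: (@leD2r G Hc _ _ (bk)).
    by rewrite uc; exact: L_p.
  have hb1 : b1 = bk \/ b1 = b0.
    case: (eqVneq b1 bk) => [->|ne]; [by left | right].
    apply: le_anti; rewrite ub_q //=; apply: (@leD2l G Hc _ _ (am)).
    by rewrite vc; exact: L_q.
  have n1' : (1 <= n)%N by lia.
  have nn1 : (n.-1 <= n)%N by rewrite leq_pred.
  case: ha1 => Ea; case: hb1 => Eb; rewrite Ea Eb in e1.
  - move: (g_neq 1%N n n1' (leqnn n)); rewrite -e1 en eqxx.
    by move=> H; suff: false by []; apply: H; lia.
  - move: (g_neq 1%N n.-1 n1' nn1); rewrite -e1 vc eqxx.
    by move=> H; suff: false by []; apply: H; lia.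
  - move: (g_neq 1%N n.-1 n1' nn1); rewrite -e1 uc eqxx.
    by move=> H; suff: false by []; apply: H; lia.
  - move: (g_neq 1%N 0%N n1' (leq0n n)); rewrite -e1 e0 eqxx.
    by move=> H; suff: false by []; apply: H.
have mono : (1 <= n)%N -> (forall p q, in_SG S p -> in_SG S q ->
    (forall x, f x = gmul p q x) -> ~ is_monomial p -> ~ is_monomial q -> False)
    -> monolithic S f.
  move=> n1 H; split => //; split; first by exists (g 0%N); rewrite f_g // Sn.
  move=> p q Sp Sq Hpq.
  case: (classic (is_monomial p)) => [|np]; first by left.
  case: (classic (is_monomial q)) => [|nq]; first by right.
  by exfalso; exact: (H p q).
split.
- move=> n1 hlt; apply: mono => // p q Sp Sq Hpq np nq.
  have [H1 _] := core p q Sp Sq Hpq np nq n1.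
  by rewrite (lt_geF hlt) in H1.
- move=> n3 hle; apply: mono => [|p q Sp Sq Hpq np nq]; first by lia.
  have [_ H2] := core p q Sp Sq Hpq np nq ltac:(lia).
  exact: H2.
Qed.
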